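(* For every positive integer $n$, the critical exponent satisfies $m(n)\ge n-2$.
   Context: A real $n$-by-$n$ matrix is doubly nonnegative if it is symmetric, positive semidefinite, and entry-wise nonnegative. For positive semidefinite $A=\sum_i\lambda_ix_ix_i^T$ (orthonormal eigenvectors) and $t>0$, $A^t=\sum_i\lambda_i^tx_ix_i^T$. The (conventional) critical exponent $m(n)$ is the least value $m$ such that $A^t$ is doubly nonnegative for all $t\ge m$ and all $n$-by-$n$ doubly nonnegative matrices $A$. *)

(* Defs.v *)
From HB Require Import structures.
From mathcomp Require Import all_boot all_order all_algebra.
From mathcomp Require Import boolp classical_sets reals exp.
Set Implicit Arguments. Unset Strict Implicit. Unset Printing Implicit Defensive.
Import Order.TTheory GRing.Theory Num.Theory.
Local Open Scope ring_scope.

Section DNN.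
Variables (R : realType) (n : nat).

Definition symmetric_mx (A : 'M[R]_n) : Prop := A^T = A.

Definition psd_mx (A : 'M[R]_n) : Prop :=
  symmetric_mx A /\ forall x : 'cV[R]_n, 0 <= (x^T *m A *m x) ord0 ord0.

Definition nonneg_mx (A : 'M[R]_n) : Prop := forall i j, 0 <= A i j.

Definition dnn_mx (A : 'M[R]_n) : Prop := psd_mx A /\ nonneg_mx A.

(* (U, d) is a spectral decomposition of A: the columns of U are orthonormal
   eigenvectors x_i, with eigenvalues d_i, i.e. A = sum_i d_i x_i x_i^T. *)
Definition spectral_decomp (A : 'M[R]_n) (p : 'M[R]_n * 'rV[R]_n) : Prop :=
  p.1^T *m p.1 = 1%:M /\ A = p.1 *m diag_mx p.2 *m p.1^T.

(* A^t := sum_i d_i^t x_i x_i^T, for a chosen spectral decomposition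
   (exists for any symmetric A; the result does not depend on the choice
   when A is PSD and t > 0). If no decomposition exists, default to A. *)
Definition mx_rpow (A : 'M[R]_n) (t : R) : 'M[R]_n :=
  let p := xget (0, 0) (spectral_decomp A) in
  if `[< exists q, spectral_decomp A q >]
  then p.1 *m diag_mx (\row_i powR (p.2 0 i) t) *m p.1^T
  else A.

(* m is an admissible exponent: A^t is DNN for all t >= m (t > 0)
   and all n-by-n DNN matrices A. The critical exponent m(n) is the least
   such m. *)
Definition dnn_power_exponent (m : R) : Prop :=
  forall t : R, 0 < t -> m <= t ->
  forall A : 'M[R]_n, dnn_mx A -> dnn_mx (mx_rpow A t).

End DNN.

(* Main.v *)
Require Import Defs.
From HB Require Import structures.
From mathcomp Require Import all_boot all_order all_algebra.
From mathcomp Require Import boolp classical_sets reals exp.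
From mathcomp Require Import lra.
Import Order.TTheory GRing.Theory Num.Theory.
Local Open Scope ring_scope.
Set Implicit Arguments. Unset Strict Implicit. Unset Printing Implicit Defensive.

Section Work.
Variable R : realType.

Lemma sd_unique n (A : 'M[R]_n) p q (f : R -> R) :
  spectral_decomp A p -> spectral_decomp A q ->
  p.1 *m diag_mx (\row_i f (p.2 0 i)) *m p.1^T =
  q.1 *m diag_mx (\row_i f (q.2 0 i)) *m q.1^T.
Proof.
case: p => U d; case: q => V e; rewrite /spectral_decomp /= => -[hU hA] [hV hB].
have hU' := mulmx1C hU; have hV' := mulmx1C hV.
set W := U^T *m V.
have hDW : diag_mx d *m W = W *m diag_mx e.
  have -> : diag_mx d *m W = U^T *m A *m V.
    by rewrite hA !mulmxA hU mul1mx.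
  by rewrite hB !mulmxA -(mulmxA _ V^T V) hV mulmx1.
have hFW : diag_mx (\row_i f (d 0 i)) *m W = W *m diag_mx (\row_i f (e 0 i)).
  move: hDW; clearbody W; move=> hDW.
  apply/matrixP => i j; move/matrixP: hDW => /(_ i j).
  rewrite !mul_diag_mx !mul_mx_diag !mxE => h.
  have [->|Wn0] := eqVneq (W i j) 0; first by rewrite mulr0 mul0r.
  have -> : d 0 i = e 0 j.
    by apply: (mulIf Wn0); rewrite h mulrC.
  by rewrite mulrC.
rewrite -[LHS]mulmx1 -hV'.
have -> : U *m diag_mx (\row_i f (d 0 i)) *m U^T *m (V *m V^T) =
   U *m (diag_mx (\row_i f (d 0 i)) *m W) *m V^T by rewrite /W !mulmxA.
by rewrite hFW /W !mulmxA hU' mul1mx.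
Qed.


Lemma chol n (G : 'M[R]_n) : G^T = G ->
  (forall x : 'cV_n, x != 0 -> 0 < (x^T *m G *m x) 0 0) ->
  exists L : 'M_n, [/\ is_trig_mx L, forall i, 0 < L i i & G = L *m L^T].
Proof.
elim: n G => [|n IH] G sG pG.
  exists 0; split; first exact: mx0_is_trig.
    by case.
  by apply/matrixP => -[].
move: G sG pG; rewrite -[n.+1]/(1 + n)%N => G sG pG.
set a := ulsubmx G; set b := dlsubmx G; set C := drsubmx G.
have hur : ursubmx G = b^T by rewrite /b trmx_dlsub sG.
have hC : C^T = C by rewrite /C trmx_drsub sG.
have hGb : G = block_mx a b^T b C by rewrite -hur submxK.
clearbody a b C.
set al := a 0 0.
have ha : a = al%:M by rewrite /al -mx11_scalar.
have hal : 0 < al.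
  have := pG (col_mx 1%:M 0).
  rewrite col_mx_eq0 negb_and; have -> : (1%:M : 'M[R]_1) != 0.
    by apply/eqP => /matrixP/(_ 0 0); rewrite !mxE /= => /eqP; rewrite oner_eq0.
  move=> /(_ isT); rewrite hGb tr_col_mx mul_row_block mul_row_col.
  by rewrite ?(trmx0, trmx1, mul0mx, mulmx0, mul1mx, mulmx1, addr0).
have al0 : al != 0 by rewrite gt_eqF.
set S := C - al^-1 *: (b *m b^T).
have sS : S^T = S by rewrite /S linearB /= linearZ /= trmx_mul trmxK hC.
have pS : forall y : 'cV_n, y != 0 -> 0 < (y^T *m S *m y) 0 0.
  move=> y yn0.
  pose c : 'M_1 := - al^-1 *: (b^T *m y).
  have := pG (col_mx c y).
  rewrite col_mx_eq0 (negbTE yn0) andbF => /(_ isT).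
  rewrite hGb tr_col_mx mul_row_block mul_row_col.
  have hcT : c^T = - al^-1 *: (y^T *m b) by rewrite /c linearZ /= trmx_mul trmxK.
  rewrite hcT ha mul_mx_scalar scalerA mulrN mulfV // scaleN1r addNr mul0mx add0r.
  congr (_ < _ 0 0).
  rewrite /S mulmxBr mulmxBl -!scalemxAr -!scalemxAl !scaleNr mulmxDl mulNmx -!scalemxAl !mulmxA addrC.
  by [].
have [L' [tL' pL' hL']] := IH S sS pS.
pose s := Num.sqrt al.
have hs : 0 < s by rewrite sqrtr_gt0.
have s0 : s != 0 by rewrite gt_eqF.
have hss : s * s = al by rewrite -expr2 sqr_sqrtr // ltW.
exists (block_mx s%:M 0 (s^-1 *: b) L'); split.
- by rewrite is_trig_block_mx // eqxx scalar_mx_is_trig.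
- move=> i; case: (split_ordP i) => k ->.
    by rewrite block_mxEul !mxE ord1 eqxx mulr1n.
  by rewrite block_mxEdr.
rewrite hGb tr_block_mx mulmx_block ?(trmx0, mul0mx, mulmx0, addr0).
rewrite tr_scalar_mx -scalar_mxM hss -ha.
rewrite mul_scalar_mx linearZ /= scalerA mulfV // scale1r.
rewrite mul_mx_scalar scalerA mulfV // scale1r.
congr block_mx.
rewrite -hL' /S -scalemxAl -scalemxAr scalerA.
by rewrite -invfM hss addrC subrK.
Qed.


Lemma sumsq_gt0 n (v : 'cV[R]_n) : v != 0 -> 0 < (v^T *m v) 0 0.
Proof.
move=> vn0.
have [i hi] : exists i, v i 0 != 0.
  case: (pickP (fun i => v i 0 != 0)) => [i hi|h]; first by exists i.
  case/eqP: vn0; apply/matrixP => i j; rewrite ord1 mxE.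
  by move/negbT: (h i); rewrite negbK => /eqP.
rewrite mxE (bigD1 i) //= mxE.
have h1 : 0 < v i 0 * v i 0 by rewrite -expr2 lt_neqAle sqr_ge0 andbT eq_sym sqrf_eq0.
apply: (lt_le_trans h1); rewrite lerDl sumr_ge0 // => j _.
by rewrite mxE -expr2 sqr_ge0.
Qed.

Lemma qr n (K : 'M[R]_n) : (forall x : 'cV_n, K *m x = 0 -> x = 0) ->
  exists Q M : 'M_n, [/\ Q^T *m Q = 1%:M, Q^T *m K = M,
     forall i j : 'I_n, (j < i)%N -> M i j = 0 & forall i, 0 < M i i].
Proof.
move=> hK.
have sG : (K^T *m K)^T = K^T *m K by rewrite trmx_mul trmxK.
have pG : forall x : 'cV_n, x != 0 -> 0 < (x^T *m (K^T *m K) *m x) 0 0.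
  move=> x xn0; have Kx : K *m x != 0 by apply: contra xn0 => /eqP/hK ->.
  by rewrite mulmxA -trmx_mul -mulmxA sumsq_gt0.
have [L [tL pL hL]] := chol sG pG.
have uL : L \in unitmx.
  by rewrite unitmxE det_trig // unitfE gt_eqF // prodr_gt0.
have uM : L^T \in unitmx by rewrite unitmxE det_tr -unitmxE.
exists (K *m invmx L^T), L^T; split.
- rewrite trmx_mul trmx_inv trmxK mulmxA -(mulmxA _ K^T) hL mulmxA mulVmx //.
  by rewrite mul1mx mulmxV.
- by rewrite trmx_mul trmx_inv trmxK -mulmxA hL mulmxA mulVmx // mul1mx.
- by move=> i j hij; rewrite mxE; apply/is_trig_mxP.
- by move=> i; rewrite mxE.
Qed.


Definition dd (l : nat) : R := 2 ^+ l.
Definition Kmx n : 'M[R]_n := \matrix_(l, k) dd l ^+ k.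

Lemma dd_gt0 l : 0 < dd l.
Proof. by rewrite exprn_gt0. Qed.

Lemma dd_lt i j : (dd i < dd j) = (i < j)%N.
Proof. by rewrite /dd ltr_eXn2l // ltr1n. Qed.

Lemma dd_inj : injective dd.
Proof. by apply: ieexprIn => //; rewrite pnatr_eq1. Qed.

Lemma Kmx_inj n (x : 'cV[R]_n) : Kmx n *m x = 0 -> x = 0.
Proof.
case: n x => [|n] x h; first by apply/matrixP => -[].
pose p := \poly_(k < n.+1) x (inord k) 0.
have hp : forall l : 'I_n.+1, p.[dd l] = 0.
  move=> l; have := h; move/matrixP/(_ l 0); rewrite !mxE => H.
  rewrite -H horner_poly; apply: eq_bigr => k _.
  by rewrite !mxE inord_val mulrC.
have p0 : p = 0.
  apply: (@roots_geq_poly_eq0 _ _ [seq dd i | i <- iota 0 n.+1]).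
  - apply/allP => z /mapP [i]; rewrite mem_iota add0n => /andP [_ hi] ->.
    by apply/rootP; exact: (hp (Ordinal hi)).
  - by rewrite map_inj_uniq ?iota_uniq //; exact: dd_inj.
  - by rewrite size_map size_iota size_poly.
apply/matrixP => k j; rewrite ord1 mxE.
have := congr1 (fun q : {poly R} => q`_k) p0.
by rewrite coef_poly ltn_ord inord_val coef0.
Qed.

Lemma poly_sign (F : {poly R}) M r : (size F <= M.+3)%N ->
  (forall k, (k < M.+2)%N -> F.[dd k] = 0) -> 0 < F.[dd M.+2] ->
  dd M < r < dd M.+1 -> F.[r] < 0.
Proof.
move=> sF hroot hpos /andP [hr1 hr2].
set rs := [seq dd i | i <- iota 0 M.+2].
have Fn0 : F != 0 by apply: contraTneq hpos => ->; rewrite horner0 ltxx.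
have aR : all (root F) rs.
  apply/allP => z /mapP [i]; rewrite mem_iota add0n => /andP [_ hi] ->.
  by apply/rootP; exact: hroot.
have uR : uniq_roots rs.
  by rewrite uniq_rootsE map_inj_uniq ?iota_uniq //; exact: dd_inj.
have sF' : size F = (size rs).+1.
  have := max_ring_poly_roots Fn0 aR uR; rewrite /rs size_map size_iota => h.
  by apply/eqP; rewrite eqn_leq sF h.
have hF := all_roots_prod_XsubC sF' aR uR.
have ev : forall z, F.[z] = lead_coef F * \prod_(i <- iota 0 M.+2) (z - dd i).
  move=> z; rewrite {1}hF hornerZ horner_prod big_map; congr (_ * _).
  by apply: eq_bigr => i _; rewrite hornerXsubC.
have lpos : 0 < lead_coef F.
  move: hpos; rewrite ev pmulr_lgt0 //.
  rewrite big_seq_cond prodr_gt0 // => i /andP [].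
  by rewrite mem_iota add0n => /andP [_ hi] _; rewrite subr_gt0 dd_lt.
rewrite ev pmulr_rlt0 // -addn1 iotaD big_cat big_seq1 add0n.
rewrite pmulr_rlt0 ?subr_lt0 //.
rewrite big_seq_cond prodr_gt0 // => i /andP [].
rewrite mem_iota add0n => /andP [_ hi] _; rewrite subr_gt0.
by apply: le_lt_trans hr1; rewrite /dd ler_eXn2l ?ltr1n.
Qed.


Lemma quad_diag n (v : 'cV[R]_n) (d : 'rV_n) : (forall l, 0 <= d 0 l) ->
  0 <= (v^T *m diag_mx d *m v) 0 0.
Proof.
move=> hd; rewrite mul_mx_diag mxE sumr_ge0 // => l _.
by rewrite !mxE mulrAC mulr_ge0 // -expr2 sqr_ge0.
Qed.

Lemma sum_single n (F : 'I_n -> R) k : (forall j, j != k -> F j = 0) ->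
  \sum_j F j = F k.
Proof. by move=> h; rewrite (bigD1 k) //= big1 ?addr0 // => j /h. Qed.

Lemma T_props n (Q M : 'M[R]_n) : Q^T *m Q = 1%:M -> Q^T *m Kmx n = M ->
  (forall i j : 'I_n, (j < i)%N -> M i j = 0) -> (forall i, 0 < M i i) ->
  dnn_mx (Q^T *m diag_mx (\row_l dd l) *m Q).
Proof.
move=> hQ hM hMt hMd.
set T := Q^T *m diag_mx (\row_l dd l) *m Q.
have hQ' := mulmx1C hQ.
have hdd : forall l, 0 <= (\row_l dd l : 'rV[R]_n) 0 l.
  by move=> l; rewrite mxE ltW // dd_gt0.
have sT : T^T = T by rewrite /T !trmx_mul trmxK tr_diag_mx mulmxA.
have hQM : Q *m M = Kmx n by rewrite -hM mulmxA hQ' mul1mx.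
have hTM : forall (i k k' : 'I_n), val k' = (val k).+1 ->
    \sum_j T i j * M j k = M i k'.
  move=> i k k' hk.
  have -> : \sum_j T i j * M j k = (T *m M) i k by rewrite mxE.
  rewrite /T -mulmxA hQM -hM !mxE; apply: eq_bigr => l _.
  by rewrite mul_mx_diag !mxE hk exprS /dd mulrA.
have hsum : forall (i k : 'I_n), (forall j : 'I_n, (j < k)%N -> T i j = 0) ->
    \sum_j T i j * M j k = T i k * M k k.
  move=> i k h; apply: sum_single => j hj.
  case: (ltngtP j k) => hjk.
  - by rewrite h // mul0r.
  - by rewrite hMt // mulr0.
  - by move: hj; rewrite (val_inj hjk) eqxx.
have zero : forall (k i : 'I_n), (k.+1 < i)%N -> T i k = 0.
  suff: forall m (k : 'I_n), (k <= m)%N -> forall i : 'I_n, (k.+1 < i)%N -> T i k = 0.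
    by move=> h k; apply: (h k).
  elim=> [|m IH] k hk i hi.
  - have hk1 : ((val k).+1 < n)%N by apply: ltn_trans hi (ltn_ord i).
    have := hTM i k (Ordinal hk1) erefl; rewrite hsum; last first.
      by move=> j hj; have := leq_trans hj hk.
    rewrite (hMt i (Ordinal hk1)) //= => /eqP; rewrite mulf_eq0 (gt_eqF (hMd k)) orbF.
    by move/eqP.
  - have hk1 : ((val k).+1 < n)%N by apply: ltn_trans hi (ltn_ord i).
    have := hTM i k (Ordinal hk1) erefl; rewrite hsum; last first.
      move=> j hj; apply: IH; first by rewrite -ltnS (leq_trans hj).
      by apply: ltn_trans hi; rewrite ltnS.
    rewrite (hMt i (Ordinal hk1)) //= => /eqP; rewrite mulf_eq0 (gt_eqF (hMd k)) orbF.
    by move/eqP.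
have pos : forall (k i : 'I_n), val i = (val k).+1 -> 0 < T i k.
  move=> k i hi.
  have := hTM i k i hi; rewrite hsum; last first.
    by move=> j hj; apply: zero; rewrite hi ltnS.
  by move=> h; move: (hMd i); rewrite -h pmulr_lgt0.
have diag : forall i, 0 <= T i i.
  move=> i; rewrite /T mul_mx_diag mxE sumr_ge0 // => l _.
  rewrite !mxE mulrAC; apply: mulr_ge0; [by rewrite -expr2 sqr_ge0 | exact: ltW (dd_gt0 _)].
have low : forall i j : 'I_n, (j < i)%N -> 0 <= T i j.
  move=> i j hij; case: (ltngtP i j.+1) => h.
  - by move: h; rewrite ltnS leqNgt hij.
  - by rewrite zero.
  - by rewrite ltW // pos.
split; last first.
  move=> i j; case: (ltngtP i j) => h.
  - by rewrite -sT mxE low.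
  - by rewrite low.
  - by rewrite (val_inj h) diag.
split; first exact: sT.
move=> x; rewrite /T !mulmxA -trmx_mul -!mulmxA mulmxA.
exact: quad_diag.
Qed.


Lemma powR2_lt (a b : R) : a < b -> powR 2 a < powR 2 b.
Proof.
move=> hab; rewrite /powR pnatr_eq0 /= ltr_expR ltr_pM2r //.
by rewrite ln_gt0 // ltr1n.
Qed.

Lemma powR_dd l (t : R) : powR (dd l) t = (powR 2 t) ^+ l.
Proof.
elim: l => [|l IH]; first by rewrite /dd expr0 powR1.
by rewrite /dd exprS powRM ?ler0n ?exprn_ge0 // -/(dd l) IH exprS.
Qed.

End Work.

Theorem theorem3p2 (R : realType) (n : nat) :
  (0 < n)%N ->
  forall m : R, 0 <= m -> dnn_power_exponent n m -> n%:R - 2 <= m.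
Proof.
move=> n0 m m0 H; rewrite leNgt; apply/negP => hm.
case: n n0 H hm => [|[|[|N]]] // _ H hm.
- by move: hm; rewrite /= => hm; lra.
- by move: hm; rewrite /= => hm; lra.
have hN : (N.+3)%:R - 2 = N%:R + 1 :> R.
  by rewrite -addn3 natrD; lra.
rewrite hN in hm.
have hN0 : (0 : R) <= N%:R by rewrite ler0n.
have [t [t0 [mt [t1 t2]]]] :
    exists t : R, 0 < t /\ m <= t /\ N%:R < t /\ t < N%:R + 1.
  case: (lerP m N%:R) => h.
    by exists (N%:R + 1 / 2); split; [lra | split; [lra | split; lra]].
  by exists ((m + N%:R + 1) / 2); split; [lra | split; [lra | split; lra]].
have [Q [M [hQ hM hMt hMd]]] := qr (@Kmx_inj R N.+3).
set T := Q^T *m diag_mx (\row_l dd R l) *m Q.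
have dT := T_props hQ hM hMt hMd.
have := (H t t0 mt T dT).2 ord0 ord_max.
have sdT : spectral_decomp T (Q^T, \row_l dd R l).
  by split; rewrite /= trmxK //; exact: mulmx1C hQ.
have -> : mx_rpow T t = Q^T *m diag_mx (\row_i powR (dd R i) t) *m Q.
  rewrite /mx_rpow asboolT; last by exists (Q^T, \row_l dd R l).
  rewrite (sd_unique (fun x => powR x t) (xgetPex (0,0) (ex_intro _ _ sdT)) sdT) /=.
  rewrite trmxK; congr (_ *m diag_mx _ *m _); apply/rowP => i; rewrite !mxE.
  by [].
apply/negP; rewrite -ltNge.
have hQM : Q *m M = Kmx R N.+3 by rewrite -hM mulmxA (mulmx1C hQ) mul1mx.
have hQ0 : forall l, Q l ord0 = (M ord0 ord0)^-1.
  move=> l; have := congr1 (fun A : 'M_N.+3 => A l ord0) hQM.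
  rewrite /= !mxE (sum_single (k := ord0)); last first.
    by move=> j hj; rewrite hMt ?mulr0 // lt0n.
  by rewrite expr0 => h; rewrite -[RHS]mul1r -h mulfK // gt_eqF.
set r := powR 2 t.
pose F := \poly_(i < N.+3) Q (inord i) ord_max.
have hent : (Q^T *m diag_mx (\row_i powR (dd R i) t) *m Q) ord0 ord_max
    = (M ord0 ord0)^-1 * F.[r].
  rewrite mul_mx_diag mxE horner_poly mulr_sumr; apply: eq_bigr => l _.
  rewrite !mxE hQ0 powR_dd inord_val -/r.
  by rewrite mulrAC mulrA.
rewrite hent pmulr_rlt0 ?invr_gt0 //.
apply: (@poly_sign R F N r).
- exact: size_poly.
- move=> k hk.
  have hk' : (k < N.+3)%N by apply: ltn_trans hk _.
  have := congr1 (fun A : 'M_N.+3 => A ord_max (Ordinal hk')) hM.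
  rewrite /= mxE hMt //= => h; rewrite -h horner_poly; apply: eq_bigr => i _.
  by rewrite !mxE inord_val /dd exprAC.
- have := congr1 (fun A : 'M_N.+3 => A ord_max ord_max) hM.
  rewrite /= mxE => h; rewrite horner_poly.
  have -> : \sum_(i < N.+3) Q (inord i) ord_max * dd R N.+2 ^+ i
      = \sum_j (Q^T) ord_max j * Kmx R N.+3 j ord_max.
    by apply: eq_bigr => i _; rewrite !mxE inord_val /dd exprAC.
  by rewrite h.
- rewrite /r /dd -!powR_mulrn ?ler0n // !powR2_lt //.
  by rewrite -natr1.
Qed.
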